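(* For every odd $q\geq 3$, the generalized Farey map $F_q\colon[0,1]\to[0,1]$ is topologically mixing: for all nonempty open sets $B_1,B_2\subseteq[0,1]$ there is $N\in\mathbb{N}$ such that $F_q^{n}(B_1)\cap B_2\neq\emptyset$ for all $n\geq N$.
   Context: Let $q\geq 3$ be odd and $\lambda=2\cos(\pi/q)$. Elements of $\mathrm{PGL}_2(\mathbb{R})$ act on $\mathbb{R}\cup\{\infty\}$ by $\begin{bmatrix}a&b\\c&d\end{bmatrix}.x=(ax+b)/(cx+d)$. Put $s(x)=\sin(x\pi/q)/\sin(\pi/q)$, $g_k=\begin{bmatrix}s(k)&-s(k+1)\\-s(k-1)&s(k)\end{bmatrix}$, $Q=\begin{bmatrix}0&1\\1&0\end{bmatrix}$, $K=\{(q+1)/2,\dots,q-1\}$. The generalized Farey map $F_q\colon[0,1]\to[0,1]$ is defined, for $k\in K$, by $F_q(x)=g_k.x$ for $x\in[g_k^{-1}.0,g_k^{-1}.1]$ and $F_q(x)=Qg_k.x$ for $x\in[(Qg_k)^{-1}.1,(Qg_k)^{-1}.0]$ (these intervals cover $[0,1]$, overlap only at endpoints, and the definitions agree there). *)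

(* Defs.v *)
From mathcomp Require Import all_boot all_order all_algebra.
From mathcomp Require Import all_classical all_reals all_analysis.
Set Implicit Arguments. Unset Strict Implicit. Unset Printing Implicit Defensive.
Import Order.TTheory GRing.Theory Num.Theory numFieldNormedType.Exports.
Local Open Scope ring_scope.
Local Open Scope classical_set_scope.

Section Farey.
Variable R : realType.
Variable q : nat.

Definition sq (x : R) : R := sin (x * pi / q%:R) / sin (pi / q%:R).

(* A 2x2 matrix [a b; c d] as a quadruple; its action x |-> (a x + b)/(c x + d). *)
Definition mob (m : R * R * R * R) (x : R) : R :=
  let: (a, b, c, d) := m in (a * x + b) / (c * x + d).

(* inverse in PGL_2 (adjugate) *)
Definition minv (m : R * R * R * R) : R * R * R * R :=
  let: (a, b, c, d) := m in (d, - b, - c, a).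

Definition gk (k : nat) : R * R * R * R :=
  (sq k%:R, - sq k.+1%:R, - sq (k%:R - 1), sq k%:R).

(* Q g for Q = [0 1; 1 0] *)
Definition Qm (m : R * R * R * R) : R * R * R * R :=
  let: (a, b, c, d) := m in (c, d, a, b).

Definition Kset : seq nat := iota (q.+1 %/ 2) (q.-1 - q.+1 %/ 2).+1.

Definition branch (x : R) (k : nat) : option R :=
  let g := gk k in
  if (mob (minv g) 0 <= x <= mob (minv g) 1) then Some (mob g x)
  else if (mob (minv (Qm g)) 1 <= x <= mob (minv (Qm g)) 0) then Some (mob (Qm g) x)
  else None.

(* The generalized Farey map F_q (value 0 off its domain [0,1];
   at shared endpoints the first matching branch is used, the branches agree there). *)
Definition Fq (x : R) : R :=
  if (0 <= x <= 1) then
    foldr (fun k acc => match branch x k with Some y => y | None => acc end) 0 Kset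
  else 0.

End Farey.

Definition open_in_unit (R : realType) (B : set R) : Prop :=
  exists U : set R, open U /\ B = U `&` `[0, 1]%classic.

(* Main.v *)
Require Import Defs.
From mathcomp Require Import all_boot all_order all_algebra.
From mathcomp Require Import all_classical all_reals all_analysis.
From mathcomp Require Import ring lra zify.
Import Order.TTheory GRing.Theory Num.Theory numFieldNormedType.Exports.
Local Open Scope ring_scope.

Section Abstract.
Variable R : realType.
Variable F : R -> R.
Variable M : nat.
Variable t : nat -> R.
Hypothesis hM : (0 < M)%N.
Hypothesis ht0 : t 0 = 0.
Hypothesis htM : t M = 1.
Hypothesis htinc : forall {i : nat}, (i < M)%N -> t i < t i.+1.
Hypothesis hexp : forall {i : nat}, (i < M)%N -> exists2 sg : R, (sg = 1 \/ sg = -1) &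
   forall x y, t i <= x -> x <= y -> y <= t i.+1 ->
     (y - x) * (1 + (y - x)) <= sg * (F y - F x).
Hypothesis hivt : forall {i : nat}, (i < M)%N -> forall x y v, t i <= x -> x <= y -> y <= t i.+1 ->
   ((F x <= v <= F y) \/ (F y <= v <= F x)) -> exists z, x <= z <= y /\ F z = v.
Hypothesis hval : forall {i : nat}, (i <= M)%N -> F (t i) = 0 \/ F (t i) = 1.

Lemma t_mono {i j} : (i <= j)%N -> (j <= M)%N -> t i <= t j.
Proof.
elim: j => [|j IH]; first by rewrite leqn0 => /eqP ->.
rewrite leq_eqVlt => /orP [/eqP -> //| hij] hj.
apply: le_trans (IH hij (ltnW hj)) _; exact/ltW/htinc.
Qed.

Lemma t_smono {i j} : (i < j)%N -> (j <= M)%N -> t i < t j.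
Proof.
move=> hij hj; have h1 := htinc (leq_trans hij hj).
have h2 := t_mono hij hj. lra.
Qed.

Lemma find_piece {a} : 0 <= a -> a < 1 -> exists i, [/\ (i < M)%N, t i <= a & a < t i.+1].
Proof.
move=> h0 h1.
suff H : forall n, (n <= M)%N -> a < t n -> exists i, [/\ (i < n)%N, t i <= a & a < t i.+1].
  have := H M (leqnn M); rewrite htM => /(_ h1) [i [hi h2 h3]].
  by exists i.
elim=> [|n IH] hn ha; first by move: ha; rewrite ht0; lra.
have [hlt|hge] := ltP a (t n).
  have [i [hi h2 h3]] := IH (ltnW hn) hlt. by exists i; split => //; exact: ltnW.
by exists n.
Qed.

Lemma range_piece {i x} : (i < M)%N -> t i <= x -> x <= t i.+1 -> 0 <= F x <= 1.
Proof.
move=> hi h1 h2.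
have [sg hsg H] := hexp hi.
have H1 := H _ _ (lexx _) h1 h2.
have H2 := H _ _ h1 h2 (lexx _).
have V1 := hval (ltnW hi). have V2 := hval hi.
have P1 : 0 <= (x - t i) * (1 + (x - t i)) by apply: mulr_ge0; lra.
have P2 : 0 <= (t i.+1 - x) * (1 + (t i.+1 - x)) by apply: mulr_ge0; lra.
case: hsg => E; case: V1 => V1; case: V2 => V2; rewrite E V1 V2 in H1 H2; apply/andP; split; lra.
Qed.

Lemma image_piece {i x y} : (i < M)%N -> t i <= x -> x <= y -> y <= t i.+1 ->
  exists c d, [/\ 0 <= c, d <= 1, (y - x) * (1 + (y - x)) <= d - c,
     (c = F x /\ d = F y) \/ (c = F y /\ d = F x) &
     forall v, c <= v <= d -> exists z, x <= z <= y /\ F z = v].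
Proof.
move=> hi h1 h2 h3.
have [sg hsg H] := hexp hi.
have Hxy := H _ _ h1 h2 h3.
have /andP[r1 r2] := range_piece hi h1 (le_trans h2 h3).
have /andP[r3 r4] := range_piece hi (le_trans h1 h2) h3.
case: hsg => E; rewrite E in Hxy.
- exists (F x), (F y); split => //; first lra.
  + by left.
  + move=> v hv; apply: (hivt hi) => //; by left.
- exists (F y), (F x); split => //; first lra.
  + by right.
  + move=> v hv; apply: (hivt hi) => //; by right.
Qed.

Definition img (a b c d : R) :=
  forall v, c <= v <= d -> exists z, a <= z <= b /\ F z = v.

Lemma full_piece {i} : (i < M)%N -> img (t i) (t i.+1) 0 1.
Proof.
move=> hi.
have [c [d [h1 h2 h3 h4 h5]]] := image_piece hi (lexx _) (ltW (htinc hi)) (lexx _).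
have hl := htinc hi.
have P : 0 < (t i.+1 - t i) * (1 + (t i.+1 - t i)) by apply: mulr_gt0; lra.
have V1 := hval (ltnW hi). have V2 := hval hi.
have [E1 E2] : c = 0 /\ d = 1.
  by case: h4 => [[E1 E2]|[E1 E2]]; case: V1 => V1; case: V2 => V2; split; lra.
by rewrite E1 E2 in h5.
Qed.

Definition touch (a b : R) := (a = 0) \/ (b = 1).

Lemma img_sub a b a' b' c d : a' <= a -> b <= b' -> img a b c d -> img a' b' c d.
Proof.
move=> h1 h2 H v hv; have [z [/andP[z1 z2] hz]] := H v hv.
exists z; split => //; apply/andP; split; lra.
Qed.

Lemma step {a b} : 0 <= a -> a < b -> b <= 1 ->
  img a b 0 1 \/ exists c d, [/\ 0 <= c, c < d, d <= 1, img a b c d &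
     ((b - a) * (1 + (b - a)) <= d - c /\ (touch a b -> touch c d))
     \/ [/\ touch c d, (b - a) / 2 <= d - c & ~ touch a b]].
Proof.
move=> h0 hab h1.
have [i [hi hia hai]] := find_piece h0 (lt_le_trans hab h1).
have [hb|hb] := leP b (t i.+1).
  have [c [d [c0 d1 hl hcd himg]]] := image_piece hi hia (ltW hab) hb.
  have P : 0 < (b - a) * (1 + (b - a)) by apply: mulr_gt0; lra.
  right; exists c, d; split; [done | lra | done | done | left; split; first done].
  have Fa : a = 0 -> F a = 0 \/ F a = 1 by move=> ->; have := hval (leq0n M); by rewrite ht0.
  have Fb : b = 1 -> F b = 0 \/ F b = 1 by move=> ->; have := hval (leqnn M); by rewrite htM.
  move=> T; case: T => [/Fa|/Fb] [] E; rewrite /touch;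
   case: hcd => [[E1 E2]|[E1 E2]]; rewrite E in E1 E2; lra.
have hi1 : (i.+1 < M)%N.
  rewrite ltn_neqAle hi andbT; apply/eqP => E.
  by move: hb; rewrite E htM; lra.
have [hia'|hia'] := leP a (t i).
  left; apply: img_sub (full_piece hi); lra.
have [hb'|hb'] := leP (t i.+2) b.
  left; apply: img_sub (full_piece hi1); lra.
have ti0 : 0 <= t i by rewrite -ht0; apply: t_mono => //; exact: ltnW.
have ti2 : t i.+2 <= 1 by rewrite -htM; apply: t_mono.
have nt : ~ touch a b by rewrite /touch; lra.
have Vs := hval hi.
have [hs|hs] := leP ((b - a) / 2) (t i.+1 - a).
  have [c [d [c0 d1 hl hcd himg]]] := image_piece hi (ltW hia') (ltW hai) (lexx _).
  have P : t i.+1 - a <= (t i.+1 - a) * (1 + (t i.+1 - a)) by nra.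
  right; exists c, d; split => //; first lra.
    by apply: img_sub himg; lra.
  right; split => //; last lra.
  rewrite /touch; case: Vs => E; case: hcd => [[E1 E2]|[E1 E2]]; rewrite E in E1 E2; try lra.
have [c [d [c0 d1 hl hcd himg]]] := image_piece hi1 (lexx _) (ltW hb) (ltW hb').
have P : b - t i.+1 <= (b - t i.+1) * (1 + (b - t i.+1)) by nra.
right; exists c, d; split => //; first lra.
  by apply: img_sub himg; lra.
right; split => //; last lra.
rewrite /touch; case: Vs => E; case: hcd => [[E1 E2]|[E1 E2]]; rewrite E in E1 E2; try lra.
Qed.


Definition covers n a b := forall v, 0 <= v <= 1 -> exists z, a <= z <= b /\ iter n F z = v.

Lemma covers_img n a b c d : img a b c d -> covers n c d -> covers n.+1 a b.
Proof.
move=> H C v hv; have [z' [hz' E]] := C v hv.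
have [z [hz E']] := H z' hz'.
by exists z; split => //; rewrite iterSr E'.
Qed.

Lemma covers_succ n a b : covers n a b -> covers n.+1 a b.
Proof.
move=> C v hv.
have [w [hw Ew]] := full_piece hM v hv.
have t1 : t 1 <= 1 by rewrite -htM; apply: t_mono.
case/andP: hw; rewrite ht0 => w1 w2.
have hw' : 0 <= w <= 1 by apply/andP; split; lra.
have [z [hz Ez]] := C w hw'.
by exists z; split => //; rewrite iterS Ez.
Qed.

Lemma covers_le n m a b : (n <= m)%N -> covers n a b -> covers m a b.
Proof.
elim: m => [|m IH]; first by rewrite leqn0 => /eqP ->.
rewrite leq_eqVlt => /orP [/eqP -> //| hnm] C.
exact/covers_succ/IH.
Qed.

Lemma step2 {del a b e} : 0 < del -> del <= 1 -> 0 <= a -> a < b -> b <= 1 ->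
  (del <= b - a \/ (touch a b /\ del / 2 <= b - a)) ->
  (e = 0 \/ (e = 1 /\ touch a b)) ->
  img a b 0 1 \/ exists c d e', [/\ 0 <= c, c < d, d <= 1 & img a b c d] /\ [/\
      (del <= d - c \/ (touch c d /\ del / 2 <= d - c)),
      (e' = 0 \/ (e' = 1 /\ touch c d)) & b - a + e + del ^+ 2 / 4 <= d - c + e'].
Proof.
move=> d0 d1 h0 hab h1 Inv He.
have [C|[c [d [c0 cd d1' Himg O]]]] := step h0 hab h1; first by left.
right.
have hba : del / 2 <= b - a by case: Inv => [|[]]; lra.
have sq : del ^+ 2 / 4 <= (b - a) ^+ 2.
  have : (del / 2) ^+ 2 <= (b - a) ^+ 2 by rewrite ler_sqr ?nnegrE; lra.
  by rewrite expr_div_n; lra.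
case: O => [[hl ht]|[tc hl nt]].
- exists c, d, e; split; first by split. split.
  + case: Inv => [I|[T I]]; [left| right; split; [exact: ht| ]]; nra.
  + case: He => [->|[-> T]]; [by left| by right; split; [|exact: ht]].
  + rewrite expr2 in sq. nra.
- have I : del <= b - a by case: Inv => // [[]].
  have E : e = 0 by case: He => // [[_ T]].
  exists c, d, 1; split; first by split. split.
  + right; split => //; lra.
  + by right.
  + have : del ^+ 2 <= 1 by rewrite expr2; nra.
    lra.
Qed.

Lemma exact_interval a b : 0 <= a -> a < b -> b <= 1 -> exists n, covers n a b.
Proof.
move=> h0 hab h1.
pose del := b - a.
have d0 : 0 < del by rewrite /del; lra.
have d1 : del <= 1 by rewrite /del; lra.
pose c0 := del ^+ 2 / 4.
have c00 : 0 < c0 by rewrite /c0; apply: divr_gt0 => //; exact: exprn_gt0.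
have c02 : c0 <= 1 / 4.
  have h : del ^+ 2 <= 1 by rewrite expr2; nra.
  rewrite /c0; lra.
suff H : forall m : nat, forall a b e, 0 <= a -> a < b -> b <= 1 ->
   (del <= b - a \/ (touch a b /\ del / 2 <= b - a)) ->
   (e = 0 \/ (e = 1 /\ touch a b)) -> 2 - m%:R * c0 <= b - a + e ->
   exists n, covers n a b.
  have hx : 0 <= 2 / c0 by apply: divr_ge0 => //; lra.
  have hm := archi_boundP hx.
  apply: (H (Num.Def.archi_bound (2 / c0)) a b 0) => //; first by left; rewrite /del.
    by left.
  rewrite ltr_pdivrMr // in hm. lra.
elim=> [|m IH] a' b' e h0' hab' h1' Inv He Hmu.
- have [C|[c [d [e' [[c0' cd d1' Himg] [Inv' He' Hmu']]]]]] := step2 d0 d1 h0' hab' h1' Inv He.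
    by exists 1%N; apply: covers_img C _ => v hv; exists v; split.
  exfalso.
  have : e' <= 1 by case: He' => [->|[-> _]]; lra.
  rewrite mul0r in Hmu. rewrite -/c0 in Hmu'. lra.
- have [C|[c [d [e' [[c0' cd d1' Himg] [Inv' He' Hmu']]]]]] := step2 d0 d1 h0' hab' h1' Inv He.
    by exists 1%N; apply: covers_img C _ => v hv; exists v; split.
  have [n Hn] : exists n, covers n c d.
    apply: (IH c d e') => //.
    rewrite -natr1 in Hmu. rewrite -/c0 in Hmu'. lra.
  by exists n.+1; apply: covers_img Himg Hn.
Qed.

End Abstract.


Section Trig.
Variable R : realType.
Variable q : nat.
Hypothesis hq : (2 <= q)%N.

Let q0 : 0 < q%:R :> R.
Proof. by rewrite ltr0n; lia. Qed.

Let th := pi / q%:R :> R.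

Let sth0 : 0 < sin th.
Proof.
apply: sin_gt0_pi; apply/andP; split; first by apply: divr_gt0 => //; exact: pi_gt0.
rewrite /th ltr_pdivrMr //. have hp := @pi_gt0 R.
have : 2%:R <= q%:R :> R by rewrite ler_nat.
nra.
Qed.

Lemma sq_id (x : R) : sq q x ^+ 2 - sq q (x + 1) * sq q (x - 1) = 1.
Proof.
rewrite /sq.
set A := x * pi / q%:R.
have E1 : (x + 1) * pi / q%:R = A + th by rewrite /A /th; ring.
have E2 : (x - 1) * pi / q%:R = A - th by rewrite /A /th; ring.
rewrite E1 E2 -/th.
have key : sin (A + th) * sin (A - th) = sin A ^+ 2 - sin th ^+ 2.
  rewrite sinD sinB.
  transitivity ((sin A * cos th) ^+ 2 - (cos A * sin th) ^+ 2); first by ring.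
  by rewrite !exprMn !cos2sin2; ring.
have sn : sin th != 0 by rewrite gt_eqF.
have -> : sin (A + th) / sin th * (sin (A - th) / sin th)
   = (sin (A + th) * sin (A - th)) / sin th ^+ 2 by field.
rewrite key; field; exact: sn.
Qed.

Lemma sq_ge0 (x : R) : 0 <= x -> x <= q%:R -> 0 <= sq q x.
Proof.
move=> h0 h1; rewrite /sq; apply: divr_ge0; last exact: ltW.
apply: sin_ge0_pi; apply/andP; split.
  apply: divr_ge0 => //; apply: mulr_ge0 => //; exact: (ltW (@pi_gt0 R)).
rewrite ler_pdivrMr //. have hp := @pi_gt0 R. nra.
Qed.

Lemma sq_ge1 (x : R) : 1 <= x -> x <= q%:R - 1 -> 1 <= sq q x.
Proof.
move=> h0 h1.
have e := sq_id x.
have p1 : 0 <= sq q (x + 1) by apply: sq_ge0; lra.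
have p2 : 0 <= sq q (x - 1) by apply: sq_ge0; lra.
have p3 : 0 <= sq q x by apply: sq_ge0; lra.
have p4 : 0 <= sq q (x + 1) * sq q (x - 1) by apply: mulr_ge0.
nra.
Qed.

Lemma sq_q : sq q (q%:R : R) = 0.
Proof. by rewrite /sq mulrAC divff ?gt_eqF // mul1r sinpi mul0r. Qed.

Lemma sq_sym (x : R) : sq q (q%:R - x) = sq q x.
Proof.
rewrite /sq; congr (_ / _).
have -> : (q%:R - x) * pi / q%:R = pi - x * pi / q%:R.
  rewrite mulrBl mulrBl mulrAC divff ?gt_eqF // mul1r. done.
by rewrite sinB sinpi cospi; ring.
Qed.

End Trig.

Section Mob.
Variable R : realType.

Lemma mob_expand (A B C D x y sg : R) : A * D - B * C = sg -> (sg = 1 \/ sg = -1) ->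
  1 <= `|C| -> 0 < C * x + D -> C * x + D <= 1 -> 0 < C * y + D -> C * y + D <= 1 ->
  x <= y -> (y - x) * (1 + (y - x)) <= sg * (mob (A, B, C, D) y - mob (A, B, C, D) x).
Proof.
move=> hdet hsg hC lx0 lx1 ly0 ly1 hxy /=.
set lx := C * x + D in lx0 lx1 *; set ly := C * y + D in ly0 ly1 *.
have E : sg * ((A * y + B) / ly - (A * x + B) / lx) = (y - x) / (lx * ly).
  have sg2 : sg * sg = 1 by case: hsg => ->; ring.
  have num : (A * y + B) * lx - (A * x + B) * ly = sg * (y - x) by rewrite -hdet /lx /ly; ring.
  have nz : lx != 0 /\ ly != 0 by split; rewrite gt_eqF.
  have -> : sg * ((A * y + B) / ly - (A * x + B) / lx) =
     sg * ((A * y + B) * lx - (A * x + B) * ly) / (lx * ly).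
    by field; case: nz => -> ->.
  by rewrite num mulrA sg2 mul1r.
rewrite E.
have P0 : 0 < lx * ly by apply: mulr_gt0.
have P1 : lx * ly <= 1 - (y - x).
  have [Cp|Cn] := leP 0 C.
    rewrite ger0_norm // in hC.
    have e : ly - lx = C * (y - x) by rewrite /lx /ly; ring.
    have : (C - 1) * (y - x) >= 0 by apply: mulr_ge0; lra.
    have : lx * ly <= lx by rewrite ler_piMr //; lra.
    nra.
  rewrite ltr0_norm // in hC.
  have e : ly - lx = C * (y - x) by rewrite /lx /ly; ring.
  have : (- C - 1) * (y - x) >= 0 by apply: mulr_ge0; lra.
  have : lx * ly <= ly by rewrite ler_piMl //; lra.
  nra.
rewrite ler_pdivlMr //.
have d0 : 0 <= (y - x) * (1 + (y - x)) by apply: mulr_ge0; lra.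
have : (y - x) * (1 + (y - x)) * (lx * ly) <= (y - x) * (1 + (y - x)) * (1 - (y - x)).
  exact: ler_wpM2l.
have dd : 0 <= y - x by lra.
have : 0 <= (y - x) * (y - x) * (y - x) by apply: mulr_ge0 => //; apply: mulr_ge0.
nra.
Qed.

Lemma mob_cont (A B C D : R) (x y : R) :
  (forall z, x <= z <= y -> C * z + D != 0) ->
  {within `[x, y], continuous (mob (A, B, C, D))}%classic.
Proof.
move=> hz; apply: continuous_in_subspaceT => z; rewrite inE /= in_itv /= => /hz hz0.
have cl : forall a b : R, continuous (fun z : R => a * z + b).
  move=> a b w; apply: continuousD; last exact: cst_continuous.
  apply: continuousM; first exact: cst_continuous.
  exact: cvg_id.
change {for z, continuous ((fun w => A * w + B) \* (fun w => (C * w + D)^-1))}.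
apply: continuousM; first exact: cl.
apply: (continuousV (s := fun w => C * w + D)) => //; exact: cl.
Qed.

Lemma mob_ivt (A B C D : R) (x y v : R) : x <= y ->
  (forall z, x <= z <= y -> C * z + D != 0) ->
  (mob (A, B, C, D) x <= v <= mob (A, B, C, D) y \/ mob (A, B, C, D) y <= v <= mob (A, B, C, D) x) ->
  exists z, x <= z <= y /\ mob (A, B, C, D) z = v.
Proof.
move=> hxy hz hv.
have hv' : Num.min (mob (A, B, C, D) x) (mob (A, B, C, D) y) <= v <=
   Num.max (mob (A, B, C, D) x) (mob (A, B, C, D) y).
  case: hv => /andP[h1 h2]; apply/andP; split.
  - by rewrite ge_min h1.
  - by rewrite le_max h2 orbT.
  - by rewrite ge_min h1 orbT.
  - by rewrite le_max h2.
have [c hc E] := IVT hxy (mob_cont A B C D x y hz) hv'.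
by exists c; split => //; move: hc; rewrite in_itv.
Qed.

End Mob.

Section Alg.
Variable R : realType.
Variables al be ga : R.
Hypothesis hb : 1 <= be.
Hypothesis hg : 1 <= ga.
Hypothesis ha : 0 <= al.
Hypothesis hdet : be ^+ 2 - al * ga = 1.

Definition aa := (be + al) / (ga + be).

Let gb0 : 0 < ga + be. Proof. have := hb; have := hg; lra. Qed.
Let b0 : 0 < be. Proof. have := hb; lra. Qed.
Let g0 : 0 < ga. Proof. have := hg; lra. Qed.

Lemma aaE : aa * (ga + be) = be + al.
Proof. by rewrite /aa divfK // gt_eqF. Qed.

Lemma alg_L1 : al / be < aa.
Proof.
pose proof hb as hb'; pose proof hg as hg'; pose proof ha as ha'; pose proof hdet as hdet'.
have : aa - al / be = 1 / ((ga + be) * be).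
  rewrite /aa -hdet; field; by apply/andP; split; rewrite gt_eqF.
have : 0 < 1 / ((ga + be) * be) by apply: divr_gt0 => //; apply: mulr_gt0.
lra.
Qed.

Lemma alg_L2 : aa < be / ga.
Proof.
pose proof hb as hb'; pose proof hg as hg'; pose proof ha as ha'; pose proof hdet as hdet'.
have : be / ga - aa = 1 / ((ga + be) * ga).
  rewrite /aa -hdet; field; by apply/andP; split; rewrite gt_eqF.
have : 0 < 1 / ((ga + be) * ga) by apply: divr_gt0 => //; apply: mulr_gt0.
lra.
Qed.

Lemma alg_L3 x : al / be <= x -> x <= aa -> 0 < - ga * x + be /\ - ga * x + be <= 1.
Proof.
pose proof hb as hb'; pose proof hg as hg'; pose proof ha as ha'; pose proof hdet as hdet'.
rewrite ler_pdivrMr // /aa ler_pdivlMr // => h1 h2.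
have e1 : ga * (x * (ga + be)) <= ga * (be + al) by apply: ler_wpM2l; lra.
have e2 : be * al <= be * (x * be) by apply: ler_wpM2l; lra.
have e3 : 1 <= (ga + be) * (- ga * x + be) by nra.
have e4 : be * (- ga * x + be) <= 1 by nra.
split; nra.
Qed.

Lemma alg_L4 x : aa <= x -> x <= be / ga -> 0 < be * x + - al /\ be * x + - al <= 1.
Proof.
pose proof hb as hb'; pose proof hg as hg'; pose proof ha as ha'; pose proof hdet as hdet'.
rewrite ler_pdivlMr // /aa ler_pdivrMr // => h1 h2.
have e1 : be * (be + al) <= be * (x * (ga + be)) by apply: ler_wpM2l; lra.
have e2 : be * (x * ga) <= be * be by apply: ler_wpM2l; lra.
have e3 : 1 <= (ga + be) * (be * x + - al) by nra.
have e4 : ga * (be * x + - al) <= 1 by nra.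
split; nra.
Qed.

Lemma alg_v1 : mob (be, - al, - ga, be) (al / be) = 0.
Proof.
rewrite /=.
have -> : be * (al / be) = al by rewrite mulrC divfK // gt_eqF.
by rewrite addrN mul0r.
Qed.

Lemma alg_num : be * aa + - al = - ga * aa + be.
Proof. have := aaE; lra. Qed.

Lemma alg_den : 0 < - ga * aa + be.
Proof. by have [] := alg_L3 aa (ltW alg_L1) (lexx _). Qed.

Lemma alg_v2 : mob (be, - al, - ga, be) aa = 1.
Proof. by rewrite /= alg_num divff // gt_eqF // alg_den. Qed.

Lemma alg_v3 : mob (- ga, be, be, - al) aa = 1.
Proof. by rewrite /= alg_num divff // gt_eqF // alg_den. Qed.

Lemma alg_v4 : mob (- ga, be, be, - al) (be / ga) = 0.
Proof.
rewrite /=.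
have -> : - ga * (be / ga) = - be by rewrite mulNr mulrC divfK // gt_eqF.
by rewrite /= addNr mul0r.
Qed.

End Alg.

Local Open Scope classical_set_scope.

Lemma mixing_from (R : realType) (F : R -> R)
  (cov : forall a b : R, 0 <= a -> a < b -> b <= 1 -> exists n, covers R F n a b)
  (B1 B2 : set R) :
  (forall n a b, covers R F n a b -> covers R F n.+1 a b) ->
  open_in_unit B1 -> open_in_unit B2 -> B1 !=set0 -> B2 !=set0 ->
  exists N : nat, forall n : nat, (N <= n)%N -> (iter n F @` B1) `&` B2 !=set0.
Proof.
move=> csucc [U [oU ->]] [V [oV ->]] [x [Ux x01]] [y [Vy y01]].
move: x01 y01; rewrite /= !in_itv /= => /andP[x0 x1] /andP[y0 y1].
have /nbhs_ballP [e /= e0 he] := oU x Ux.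
pose r := Num.min (e / 2) (1 / 2).
have r0 : 0 < r by rewrite /r lt_min; apply/andP; split; lra.
have r1 : r <= 1 / 2 by rewrite /r ge_min lexx orbT.
have r2 : r < e by rewrite /r gt_min; apply/orP; left; lra.
have [a [b [h0 hab h1 hsub]]] : exists a b, [/\ 0 <= a, a < b, b <= 1 &
   forall z, a <= z <= b -> (U `&` `[0, 1]) z].
  have hin : forall z, x - r <= z <= x + r -> U z.
    move=> z /andP[z1 z2]; apply: he; rewrite -ball_normE /ball_ /=.
    have : `|x - z| <= r by rewrite ler_norml; apply/andP; split; lra.
    lra.
  have [hx|hx] := leP x (1 / 2).
    exists x, (x + r); split; [lra|lra|lra|].
    move=> z /andP[z1 z2]; split; first by apply: hin; apply/andP; split; lra.
    by rewrite /= in_itv /=; apply/andP; split; lra.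
  exists (x - r), x; split; [lra|lra|lra|].
  move=> z /andP[z1 z2]; split; first by apply: hin; apply/andP; split; lra.
  by rewrite /= in_itv /=; apply/andP; split; lra.
have [N HN] := cov a b h0 hab h1.
exists N => n hn.
have Hn : covers R F n a b.
  elim: n hn => [|n IH]; first by rewrite leqn0 => /eqP <-.
  rewrite leq_eqVlt => /orP [/eqP <- //| hnm]; exact/csucc/IH.
have [z [hz Ez]] := Hn y (ltac:(apply/andP; split => //)).
exists y; split.
  by exists z => //; apply: hsub.
by split => //; rewrite /= in_itv /=; apply/andP; split.
Qed.

Section Conc.
Variable R : realType.
Variable h : nat.
Hypothesis hh : (1 <= h)%N.
Local Notation q := (2 * h).+1.

Let hq1 : (1 < q)%N. Proof. have := hh; lia. Qed.

Definition s (n : nat) : R := sq q (n%:R : R).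

Lemma s_ge1 n : (1 <= n)%N -> (n <= 2 * h)%N -> 1 <= s n.
Proof.
move=> h1 h2; apply: sq_ge1 => //; first by rewrite ler1n.
by rewrite -natr1 addrK ler_nat.
Qed.

Lemma s_ge0 n : (n <= q)%N -> 0 <= s n.
Proof. by move=> h1; apply: sq_ge0 => //; rewrite ler_nat. Qed.

Lemma predE k : (1 <= k)%N -> k%:R - 1 = (k.-1)%:R :> R.
Proof. by move=> hk; rewrite -[in LHS](prednK hk) -natr1 addrK. Qed.

Lemma s_det k : (1 <= k)%N -> s k ^+ 2 - s k.+1 * s k.-1 = 1.
Proof.
move=> hk; have := @sq_id R q hq1 (k%:R).
by rewrite natr1 predE.
Qed.

Lemma gkE k : (1 <= k)%N -> gk R q k = (s k, - s k.+1, - s k.-1, s k).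
Proof. by move=> hk; rewrite /gk predE. Qed.

Definition kk i := (2 * h - i %/ 2)%N.
Definition al i := s (kk i).+1.
Definition be i := s (kk i).
Definition ga i := s (kk i).-1.
Definition t i := if odd i then aa R (al i) (be i) (ga i) else al i / be i.
Definition m i : R * R * R * R :=
  if odd i then (- ga i, be i, be i, - al i) else (be i, - al i, - ga i, be i).

Lemma hyps {i} : (i < 2 * h)%N ->
  [/\ 1 <= be i, 1 <= ga i, 0 <= al i & be i ^+ 2 - al i * ga i = 1].
Proof.
move=> hi; rewrite /be /ga /al /kk; split.
- apply: s_ge1; lia.
- apply: s_ge1; lia.
- apply: s_ge0; lia.
- apply: s_det; lia.
Qed.

Lemma kk_even {i} : ~~ odd i -> kk i.+1 = kk i.
Proof. move=> hi; have H := modn2 i; rewrite (negbTE hi) in H; rewrite /kk; lia. Qed.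

Lemma kk_odd {i} : odd i -> (i < 2 * h)%N -> (kk i.+1).+1 = kk i.
Proof. move=> hi hl; have H := modn2 i; rewrite hi in H; rewrite /kk; lia. Qed.

Lemma t_even {i} : ~~ odd i -> t i = al i / be i /\ t i.+1 = aa R (al i) (be i) (ga i).
Proof.
move=> hi; rewrite /t /= (negbTE hi) /=; split => //.
by rewrite /al /be /ga kk_even.
Qed.

Lemma t_odd {i} : odd i -> (i < 2 * h)%N -> t i = aa R (al i) (be i) (ga i) /\ t i.+1 = be i / ga i.
Proof.
move=> hi hl; rewrite /t /= hi /=; split => //.
by rewrite /al /be /ga -(kk_odd hi hl) /=.
Qed.


Definition vl (n : nat) : R := if odd n then 1 else 0.

Lemma P_inc {i} : (i < 2 * h)%N -> t i < t i.+1.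
Proof.
move=> hi; have [h1 h2 h3 h4] := hyps hi.
case: (boolP (odd i)) => ho.
  have [-> ->] := t_odd ho hi; exact: alg_L2.
have [-> ->] := t_even ho; exact: alg_L1.
Qed.

Lemma P_ev {i} : (i < 2 * h)%N -> mob (m i) (t i) = vl i /\ mob (m i) (t i.+1) = vl i.+1.
Proof.
move=> hi; have [h1 h2 h3 h4] := hyps hi.
rewrite /vl /m /=.
case: (boolP (odd i)) => ho /=.
  have [-> ->] := t_odd ho hi; split; [exact: alg_v3 | exact: alg_v4].
have [-> ->] := t_even ho; split; [exact: alg_v1 | exact: alg_v2].
Qed.

Lemma P_mob {i} : (i < 2 * h)%N -> exists A B C D, [/\ m i = (A, B, C, D),
  exists2 sg : R, (sg = 1 \/ sg = -1) & A * D - B * C = sg,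
  1 <= `|C| & forall x, t i <= x -> x <= t i.+1 -> 0 < C * x + D /\ C * x + D <= 1].
Proof.
move=> hi; have [h1 h2 h3 h4] := hyps hi.
rewrite /m; case: (boolP (odd i)) => ho.
  have [E1 E2] := t_odd ho hi.
  exists (- ga i), (be i), (be i), (- al i); split => //.
  - exists (-1); first by right.
    rewrite mulrNN; lra.
  - by rewrite ger0_norm //; lra.
  - move=> x; rewrite E1 E2 => hx1 hx2; exact: (@alg_L4 R _ _ _ h1 h2 h3 h4 _ hx1 hx2).
have [E1 E2] := t_even ho.
exists (be i), (- al i), (- ga i), (be i); split => //.
- exists 1; first by left.
  rewrite mulrNN; lra.
- by rewrite normrN ger0_norm //; lra.
- move=> x; rewrite E1 E2 => hx1 hx2; exact: (@alg_L3 R _ _ _ h1 h2 h3 h4 _ hx1 hx2).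
Qed.


Lemma branchE k x : (h < k)%N -> (k <= 2 * h)%N ->
  let i := (2 * (2 * h - k))%N in
  branch q x k = if (t i <= x <= t i.+1) then Some (mob (m i) x)
    else if (t i.+1 <= x <= t i.+2) then Some (mob (m i.+1) x) else None.
Proof.
move=> h1 h2 i.
have ei : ~~ odd i by rewrite /i oddM.
have ki : kk i = k by rewrite /kk /i; lia.
have ei1 : odd i.+1 by rewrite /= ei.
have hi1 : (i.+1 < 2 * h)%N by rewrite /i; lia.
have [T0 T1] := t_even ei.
have [_ T2] := t_odd ei1 hi1.
have A1 : al i.+1 = al i by rewrite /al kk_even.
have B1 : be i.+1 = be i by rewrite /be kk_even.
have G1 : ga i.+1 = ga i by rewrite /ga kk_even.
rewrite T0 T1 T2 B1 G1 /m ei1 (negbTE ei) A1 B1 G1 /al /be /ga ki.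
rewrite /branch gkE; last by lia.
rewrite /= !opprK !mulr0 !mulr1 !add0r.
have e1 : forall a b c : R, (- a - b) / (- b - c) = (b + a) / (c + b).
  by move=> a b c; rewrite -!opprD invrN mulrNN [a + b]addrC [b + c]addrC.
by rewrite e1 invrN mulrNN /aa.
Qed.


Lemma htinc' : forall i, (i < 2 * h)%N -> t i < t i.+1.
Proof. by move=> i hi; exact: P_inc. Qed.

Lemma agree_lt i j x : (i < j)%N -> (j < 2 * h)%N ->
  t i <= x -> x <= t i.+1 -> t j <= x -> x <= t j.+1 -> mob (m i) x = mob (m j) x.
Proof.
move=> hij hj x1 x2 x3 x4.
have [hlt|hge] := ltnP i.+1 j.
  have := @t_smono R (2 * h) t htinc' _ _ hlt (ltnW hj); lra.
have ej : j = i.+1 by lia.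
have ex : x = t j by rewrite ej in x3 *; lra.
subst j; rewrite ex.
have [_ E1] := P_ev (ltnW hj).
have [E2 _] := P_ev hj.
by rewrite E1 E2.
Qed.

Lemma agree i j x : (i < 2 * h)%N -> (j < 2 * h)%N ->
  t i <= x -> x <= t i.+1 -> t j <= x -> x <= t j.+1 -> mob (m i) x = mob (m j) x.
Proof.
move=> hi hj x1 x2 x3 x4.
have [hlt|hgt|->] := ltngtP i j.
- exact: agree_lt.
- by symmetry; apply: agree_lt.
- by [].
Qed.


Lemma ht0 : t 0 = 0.
Proof.
rewrite /t /= /al /kk /s.
have -> : (2 * h - 0 %/ 2)%N.+1 = q by lia.
by rewrite sq_q // mul0r.
Qed.

Lemma htM : t (2 * h) = 1.
Proof.
rewrite /t oddM /= /al /be /kk.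
have -> : (2 * h - (2 * h) %/ 2)%N = h by lia.
have -> : s h.+1 = s h.
  rewrite /s; have -> : (h.+1)%:R = q%:R - h%:R :> R.
    by rewrite -natrB; [congr (_%:R); lia| lia].
  by rewrite sq_sym.
apply: divff; rewrite gt_eqF //; apply: (lt_le_trans ltr01); apply: s_ge1; lia.
Qed.

Lemma Kset_mem k : (k \in Kset q) = (h < k <= 2 * h)%N.
Proof.
rewrite /Kset mem_iota.
have -> : (q.+1 %/ 2 = h.+1)%N by lia.
have -> : (h.+1 + ((2 * h).+1.-1 - h.+1).+1 = (2 * h).+1)%N by lia.
by [].
Qed.

Lemma foldr_val (L : seq nat) (f : nat -> option R) v :
  (forall k, k \in L -> f k = None \/ f k = Some v) ->
  (exists2 k, k \in L & f k = Some v) ->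
  foldr (fun k acc => match f k with Some y => y | None => acc end) 0 L = v.
Proof.
elim: L => [|a L IH] H [k hk Hk]; first by [].
rewrite /=.
case: (H a (mem_head _ _)) => E; rewrite E; last by [].
apply: IH.
  by move=> k' hk'; apply: H; rewrite in_cons hk' orbT.
move: hk; rewrite in_cons => /orP [/eqP ek|hk]; last by exists k.
by move: Hk; rewrite ek E.
Qed.

Lemma branch_some k x : (h < k)%N -> (k <= 2 * h)%N ->
  branch q x k = None \/ exists j, [/\ (j < 2 * h)%N, t j <= x, x <= t j.+1 &
     branch q x k = Some (mob (m j) x)].
Proof.
move=> h1 h2; rewrite (branchE k x h1 h2) /=.
set i := (2 * (2 * h - k))%N.
case: ifP => [/andP[x1 x2]|_].
  by right; exists i; split => //; rewrite /i; lia.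
case: ifP => [/andP[x1 x2]|_]; last by left.
by right; exists i.+1; split => //; rewrite /i; lia.
Qed.

Lemma branch_hit i x : (i < 2 * h)%N -> t i <= x -> x <= t i.+1 ->
  branch q x (kk i) <> None.
Proof.
move=> hi x1 x2.
have k1 : (h < kk i)%N by rewrite /kk; lia.
have k2 : (kk i <= 2 * h)%N by rewrite /kk; lia.
rewrite (branchE (kk i) x k1 k2) /=.
set i0 := (2 * (2 * h - kk i))%N.
have H := modn2 i.
case: ifP => // /negbT hn.
have ho : odd i.
  apply/negPn/negP => he; rewrite (negbTE he) in H.
  have ei : i = i0 by rewrite /i0 /kk; lia.
  by move: hn; rewrite -ei x1 x2.
rewrite ho in H.
have ei : i = i0.+1 by rewrite /i0 /kk; lia.
by rewrite -ei x1 x2.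
Qed.

Lemma hF i x : (i < 2 * h)%N -> t i <= x -> x <= t i.+1 -> Fq q x = mob (m i) x.
Proof.
move=> hi x1 x2.
have x0 : 0 <= x.
  have := @t_mono R (2 * h) t htinc' 0 i (leq0n _) (ltnW hi); rewrite ht0; lra.
have x01 : x <= 1.
  have := @t_mono R (2 * h) t htinc' i.+1 (2 * h) hi (leqnn _); rewrite htM; lra.
rewrite /Fq x0 x01.
apply: foldr_val.
  move=> k; rewrite Kset_mem => /andP[k1 k2].
  case: (branch_some k x k1 k2) => [->|[j [hj y1 y2 ->]]]; first by left.
  by right; rewrite (agree _ _ _ hj hi y1 y2 x1 x2).
exists (kk i); first by rewrite Kset_mem /kk; apply/andP; split; lia.
have k1 : (h < kk i)%N by rewrite /kk; lia.
have k2 : (kk i <= 2 * h)%N by rewrite /kk; lia.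
case: (branch_some (kk i) x k1 k2) => [E|[j [hj y1 y2 ->]]].
  by have := branch_hit _ _ hi x1 x2; rewrite E.
by rewrite (agree _ _ _ hj hi y1 y2 x1 x2).
Qed.


Lemma hexp i : (i < 2 * h)%N -> exists2 sg : R, (sg = 1 \/ sg = -1) &
   forall x y, t i <= x -> x <= y -> y <= t i.+1 ->
     (y - x) * (1 + (y - x)) <= sg * (Fq q y - Fq q x).
Proof.
move=> hi; have [A [B [C [D [Em [sg hsg hdet] hC hb]]]]] := P_mob hi.
exists sg => // x y x1 x2 x3.
rewrite (hF _ _ hi x1 (le_trans x2 x3)) (hF _ _ hi (le_trans x1 x2) x3) Em.
have [b1 b2] := hb x x1 (le_trans x2 x3).
have [b3 b4] := hb y (le_trans x1 x2) x3.
exact: mob_expand.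
Qed.

Lemma hivt i : (i < 2 * h)%N -> forall x y v, t i <= x -> x <= y -> y <= t i.+1 ->
   ((Fq q x <= v <= Fq q y) \/ (Fq q y <= v <= Fq q x)) -> exists z, x <= z <= y /\ Fq q z = v.
Proof.
move=> hi x y v x1 x2 x3.
have [A [B [C [D [Em _ _ hb]]]]] := P_mob hi.
rewrite (hF _ _ hi x1 (le_trans x2 x3)) (hF _ _ hi (le_trans x1 x2) x3) Em => hv.
have hz : forall z, x <= z <= y -> C * z + D != 0.
  move=> z /andP[z1 z2]; have [] := hb z (le_trans x1 z1) (le_trans z2 x3).
  by move=> p _; rewrite gt_eqF.
have [z [/andP[z1 z2] Ez]] := @mob_ivt R A B C D x y v x2 hz hv.
exists z; split; first by apply/andP.
by rewrite (hF _ _ hi (le_trans x1 z1) (le_trans z2 x3)) Em.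
Qed.

Lemma hval i : (i <= 2 * h)%N -> Fq q (t i) = 0 \/ Fq q (t i) = 1.
Proof.
move=> hi.
have vl01 : forall n, vl n = 0 \/ vl n = 1 by move=> n; rewrite /vl; case: (odd n); [right|left].
have [hlt|heq] := ltnP i (2 * h).
  rewrite (hF _ _ hlt (lexx _) (ltW (P_inc hlt))).
  by have [-> _] := P_ev hlt.
have -> : i = (2 * h - 1).+1 by lia.
have hj : (2 * h - 1 < 2 * h)%N by lia.
rewrite (hF _ _ hj (ltW (P_inc hj)) (lexx _)).
by have [_ ->] := P_ev hj.
Qed.

Lemma mixing_h (B1 B2 : set R) :
  open_in_unit B1 -> open_in_unit B2 -> B1 !=set0 -> B2 !=set0 ->
  exists N : nat, forall n : nat, (N <= n)%N -> (iter n (Fq q) @` B1) `&` B2 !=set0.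
Proof.
apply: mixing_from.
  move=> a b; exact: (@exact_interval R (Fq q) (2 * h) t ht0 htM htinc' hexp hivt hval a b).
move=> n a b; apply: (@covers_succ R (Fq q) (2 * h) t _ ht0 htM htinc' hexp hivt hval); lia.
Qed.

End Conc.

Theorem proposition2p2 (R : realType) (q : nat) (hodd : odd q) (hq : (3 <= q)%N)
  (B1 B2 : set R) :
  open_in_unit B1 -> open_in_unit B2 -> B1 !=set0 -> B2 !=set0 ->
  exists N : nat, forall n : nat, (N <= n)%N ->
    (iter n (Fq q) @` B1) `&` B2 !=set0.
Proof.
have Hq : q = (2 * q./2).+1.
  by rewrite -[in LHS](odd_double_half q) hodd -mul2n add1n.
have hh : (1 <= q./2)%N by lia.
rewrite Hq; exact: mixing_h.
Qed.
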